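(* Let $c\ge0$ and $g_0,g_1,\dots,g_K\in\mathbb{R}^m$. Let $d^*$ be the solution of $$\max_{d\in\mathbb{R}^m}\ \min_{i\in[K]} g_i^\top d\quad\text{s.t.}\quad \|g_0-d\|\le c\|g_0\|.$$ Then $$d^*=g_0+\frac{c\|g_0\|}{\|g_{w^*}\|}\,g_{w^*},$$ where $g_{w^*}=\sum_i w^*_i g_i$ and $w^*$ is the solution of $$\min_{w\in\mathcal W}\ g_w^\top g_0+c\|g_0\|\,\|g_w\|.$$ In addition, $$\min_i g_i^\top d^*=g_{w^*}^\top g_0+c\|g_0\|\,\|g_{w^*}\|.$$
   Context: $\mathcal W=\{w\in\mathbb{R}^K: \sum_i w_i=1,\ w_i\ge0\ \forall i\in[K]\}$ is the probability simplex, and for $w\in\mathcal W$, $g_w=\sum_{i=1}^K w_i g_i$. $[K]=\{1,\dots,K\}$. *)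

(* Defs.v *)
From HB Require Import structures.
From mathcomp Require Import all_boot all_order all_algebra.
Set Implicit Arguments. Unset Strict Implicit. Unset Printing Implicit Defensive.
Import Order.TTheory GRing.Theory Num.Theory.
Local Open Scope ring_scope.

Section Defs.
Variables (R : rcfType) (m K : nat).

Definition dotv (u v : 'rV[R]_m) : R := \sum_(j < m) u 0 j * v 0 j.

Definition normv (u : 'rV[R]_m) : R := Num.sqrt (dotv u u).

(* min_{i in [K]} g_i^T d  (minimum of a nonempty finite list; K >= 1 assumed
   wherever this is used). *)
Definition min_gain (g : 'I_K -> 'rV[R]_m) (d : 'rV[R]_m) : R :=
  let s := [seq dotv (g i) d | i <- enum 'I_K] in
  \big[Num.min/head 0 s]_(x <- s) x.

Definition in_simplex (w : 'I_K -> R) : Prop :=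
  (forall i, 0 <= w i) /\ \sum_(i < K) w i = 1.

Definition gw (g : 'I_K -> 'rV[R]_m) (w : 'I_K -> R) : 'rV[R]_m :=
  \sum_(i < K) w i *: g i.

Definition feasible (c : R) (g0 d : 'rV[R]_m) : Prop :=
  normv (g0 - d) <= c * normv g0.

Definition primal_opt (c : R) (g0 : 'rV[R]_m) (g : 'I_K -> 'rV[R]_m)
  (d : 'rV[R]_m) : Prop :=
  feasible c g0 d /\
  forall d', feasible c g0 d' -> min_gain g d' <= min_gain g d.

Definition dual_obj (c : R) (g0 : 'rV[R]_m) (g : 'I_K -> 'rV[R]_m)
  (w : 'I_K -> R) : R :=
  dotv (gw g w) g0 + c * normv g0 * normv (gw g w).

Definition dual_opt (c : R) (g0 : 'rV[R]_m) (g : 'I_K -> 'rV[R]_m)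
  (w : 'I_K -> R) : Prop :=
  in_simplex w /\
  forall w', in_simplex w' -> dual_obj c g0 g w <= dual_obj c g0 g w'.

End Defs.

(* Main.v *)
Require Import Defs.
From HB Require Import structures.
From mathcomp Require Import all_boot all_order all_algebra ring lra.
Import Order.TTheory GRing.Theory Num.Theory.
Local Open Scope ring_scope.
Set Implicit Arguments. Unset Strict Implicit.

Section H.
Variables (R : rcfType) (m : nat).
Implicit Types u v w : 'rV[R]_m.

Lemma dotvC u v : dotv u v = dotv v u.
Proof. by apply: eq_bigr => j _; rewrite mulrC. Qed.
Lemma dotvDl u v w : dotv (u + v) w = dotv u w + dotv v w.
Proof. by rewrite /dotv -big_split; apply: eq_bigr => j _; rewrite mxE mulrDl. Qed.
Lemma dotvZl (k : R) u v : dotv (k *: u) v = k * dotv u v.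
Proof. by rewrite /dotv mulr_sumr; apply: eq_bigr => j _; rewrite mxE mulrA. Qed.
Lemma dotvNl u v : dotv (- u) v = - dotv u v.
Proof. by rewrite -scaleN1r dotvZl mulN1r. Qed.
Lemma dotvBl u v w : dotv (u - v) w = dotv u w - dotv v w.
Proof. by rewrite dotvDl dotvNl. Qed.
Lemma dotv0l v : dotv 0 v = 0.
Proof. by rewrite -(scale0r 0) dotvZl mul0r. Qed.
Lemma dotvDr u v w : dotv w (u + v) = dotv w u + dotv w v.
Proof. by rewrite !(dotvC w) dotvDl. Qed.
Lemma dotvZr (k : R) u v : dotv v (k *: u) = k * dotv v u.
Proof. by rewrite !(dotvC v) dotvZl. Qed.
Lemma dotvBr u v w : dotv w (u - v) = dotv w u - dotv w v.
Proof. by rewrite !(dotvC w) dotvBl. Qed.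
Lemma dotv_ge0 u : 0 <= dotv u u.
Proof. by apply: sumr_ge0 => j _; exact: (sqr_ge0 (u 0 j)). Qed.
Lemma dotv_eq0 u : dotv u u <= 0 -> u = 0.
Proof.
move=> H. have H0 : dotv u u = 0 by apply/eqP; rewrite eq_le H dotv_ge0.
apply/rowP => j; rewrite mxE.
have H1 : \sum_(j < m) (u 0 j) ^+ 2 = 0.
  by rewrite /dotv in H0; rewrite -[RHS]H0; apply: eq_bigr => k _; rewrite expr2.
have := @psumr_eq0P R _ predT (fun k => u 0 k ^+ 2) (fun k _ => sqr_ge0 (u 0 k)) H1 j isT.
move/eqP.
by rewrite sqrf_eq0 => /eqP.
Qed.
End H.

Lemma bigmin_le (R : rcfType) (x0 y : R) (s : seq R) : y \in s ->
  \big[Num.min/x0]_(x <- s) x <= y.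
Proof.
elim: s => [|a s IH] //=; rewrite big_cons in_cons => /orP [/eqP->|H].
  by rewrite ge_min lexx.
by rewrite ge_min IH ?orbT.
Qed.

Lemma le_bigmin (R : rcfType) (x0 z : R) (s : seq R) : z <= x0 ->
  (forall y, y \in s -> z <= y) -> z <= \big[Num.min/x0]_(x <- s) x.
Proof.
move=> H0 Hs; elim: s Hs => [|a s IH] Hs; first by rewrite big_nil.
rewrite big_cons le_min Hs ?mem_head //= IH // => y Hy.
by apply: Hs; rewrite in_cons Hy orbT.
Qed.

Lemma min_gain_le (R : rcfType) m K (g : 'I_K -> 'rV[R]_m) d i :
  min_gain g d <= dotv (g i) d.
Proof. by apply: bigmin_le; apply: map_f; rewrite mem_enum. Qed.

Lemma le_min_gain (R : rcfType) m K (g : 'I_K -> 'rV[R]_m) d z :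
  (0 < K)%N -> (forall i, z <= dotv (g i) d) -> z <= min_gain g d.
Proof.
move=> K0 H; rewrite /min_gain.
have Hs : forall y, y \in [seq dotv (g i) d | i <- enum 'I_K] -> z <= y.
  by move=> y /mapP [i _ ->].
apply: le_bigmin => //.
case E : [seq dotv (g i) d | i <- enum 'I_K] => [|a s] /=.
  have : size [seq dotv (g i) d | i <- enum 'I_K] = K by rewrite size_map size_enum_ord.
  by rewrite E => H0; rewrite -H0 in K0.
by apply: Hs; rewrite E mem_head.
Qed.

Unset Implicit Arguments.
Theorem lemma1 (R : rcfType) (m K : nat) (c : R) (g0 : 'rV[R]_m)
  (g : 'I_K -> 'rV[R]_m) (dstar : 'rV[R]_m) (wstar : 'I_K -> R) :
  (0 < K)%N ->
  0 <= c ->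
  primal_opt c g0 g dstar ->
  dual_opt c g0 g wstar ->
  gw g wstar != 0 ->
  dstar = g0 + (c * normv g0 / normv (gw g wstar)) *: gw g wstar /\
  min_gain g dstar = dotv (gw g wstar) g0 + c * normv g0 * normv (gw g wstar).
Proof.
move=> K0 c0 [Hfeas Hopt] [[Hw0 Hw1] Hdual] Ha.
set a := gw g wstar.
set r := c * normv g0.
have r0 : 0 <= r by rewrite /r mulr_ge0 // /normv sqrtr_ge0.
set N := normv a.
have NN : N ^+ 2 = dotv a a by rewrite /N /normv sqr_sqrtr // dotv_ge0.
have N0 : 0 < N.
  rewrite lt_def /N /normv sqrtr_ge0 andbT sqrtr_eq0 -ltNge lt_def dotv_ge0 andbT.
  by apply: contra Ha => /eqP H; apply/eqP/dotv_eq0; rewrite H.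
have foc : forall i, 0 <= r * dotv a (g i - a) + N * dotv (g i - a) g0.
  move=> i; set b := g i - a.
  have Ht : forall t, 0 <= t -> t <= 1 ->
      dotv a g0 + r * N <= dotv (a + t *: b) g0 + r * normv (a + t *: b).
    move=> t t0 t1.
    pose wt := fun j => wstar j + t * ((j == i)%:R - wstar j).
    have Hd : \sum_(j < K) ((j == i)%:R : R) = 1.
      by rewrite (bigD1 i) //= eqxx big1 ?addr0 // => j /negbTE ->.
    have Hs : in_simplex wt.
      split.
        move=> j; rewrite /wt; have := Hw0 j; case: (j == i) => /= H; nra.
      by rewrite /wt big_split /= -mulr_sumr sumrB Hw1 Hd subrr mulr0 addr0.
    have Hg : gw g wt = a + t *: b.
      rewrite /gw /wt /b /a /gw.
      under eq_bigr do rewrite scalerDl -scalerA scalerBl.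
      rewrite big_split /= -scaler_sumr sumrB; congr (_ + t *: (_ - _)).
      by rewrite (bigD1 i) //= eqxx scale1r big1 ?addr0 // => j /negbTE ->; rewrite scale0r.
    by have := Hdual wt Hs; rewrite /dual_obj Hg -/a -/r.
  clearbody b; set beta := dotv b g0; set p := dotv a b; set Q := dotv b b.
  have [r_0|rn0] := eqVneq r 0.
    have H := Ht 1 ler01 (lexx _); rewrite scale1r dotvDl -/beta r_0 !mul0r !addr0 in H.
    rewrite r_0 mul0r add0r mulr_ge0 ?(ltW N0) //; lra.
  have rp : 0 < r by rewrite lt_def rn0 r0.
  set A := r * p + N * beta; set B := r * Q.
  have B0 : 0 <= B by rewrite mulr_ge0 // dotv_ge0.
  have key : forall t, 0 < t -> t <= 1 -> t * (`|beta| + 1) <= r * N -> 0 <= 2 * A + t * B.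
    move=> t t0 t1 tb.
    have := Ht t (ltW t0) t1; rewrite dotvDl dotvZl -/beta => H.
    set S := normv (a + t *: b) in H.
    have nrm : S ^+ 2 = N ^+ 2 + 2 * t * p + t ^+ 2 * Q.
      rewrite /S /normv sqr_sqrtr ?dotv_ge0 // NN !(dotvDl, dotvDr, dotvZl, dotvZr).
      rewrite (@dotvC _ _ b a) -/p -/Q; ring.
    have S0 : 0 <= S by rewrite /S /normv sqrtr_ge0.
    have hb : t * beta <= t * (`|beta| + 1).
      by rewrite ler_wpM2l ?ltW //; have := ler_norm beta; lra.
    have h1 : 0 <= r * N - t * beta by lra.
    have h2 : r * N - t * beta <= r * S by lra.
    have h3 : (r * N - t * beta) ^+ 2 <= (r * S) ^+ 2.
      by rewrite !expr2; nra.
    have h4 : (r * S) ^+ 2 = r ^+ 2 * (N ^+ 2 + 2 * t * p + t ^+ 2 * Q) by rewrite exprMn nrm.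
    have h5 : 0 <= (t * r) * (2 * A + t * B).
      have -> : (t * r) * (2 * A + t * B) = (r * S) ^+ 2 - (r * N - t * beta) ^+ 2 + (t * beta) ^+ 2.
        by rewrite h4 /A /B; ring.
      by have := sqr_ge0 (t * beta); lra.
    by rewrite pmulr_rge0 // in h5; rewrite mulr_gt0.
  rewrite leNgt; apply/negP => An.
  have bp : 0 < `|beta| + 1 by have := normr_ge0 beta; lra.
  set t := Num.min (Num.min 1 (r * N / (`|beta| + 1))) (- A / (B + 1)).
  have tp : 0 < t.
    have nA : 0 < - A by lra. have B1 : 0 < B + 1 by lra.
    by rewrite /t !lt_min ltr01 (divr_gt0 (mulr_gt0 rp N0) bp) (divr_gt0 nA B1).
  have t1 : t <= 1 by rewrite /t !ge_min lexx.
  have t2 : t * (`|beta| + 1) <= r * N.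
    by rewrite -ler_pdivlMr // /t !ge_min lexx orbT.
  have t3 : t * (B + 1) <= - A.
    by rewrite -ler_pdivlMr; [rewrite /t ge_min lexx orbT | lra].
  have := key t tp t1 t2; nra.
set k := r / N.
have kN : k * N = r by rewrite /k divfK // gt_eqF.
have k0 : 0 <= k by rewrite /k divr_ge0 // ltW.
have Hdh : forall i, dotv a g0 + r * N <= dotv (g i) (g0 + k *: a).
  move=> i; have := foc i.
  rewrite dotvBl dotvBr dotvDr dotvZr (@dotvC _ _ (g i) a) -NN => H.
  rewrite -(ler_pM2l N0).
  have -> : N * (dotv (g i) g0 + k * dotv a (g i)) = N * dotv (g i) g0 + (k * N) * dotv a (g i) by ring.
  rewrite kN; nra.
have feas_dh : feasible c g0 (g0 + k *: a).
  rewrite /feasible -/r opprD addrA subrr add0r -scaleNr /normv dotvZl dotvZr -NN.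
  have -> : - k * (- k * N ^+ 2) = (k * N) ^+ 2 by ring.
  by rewrite kN sqrtr_sqr ger0_norm.
have mg1 : dotv a g0 + r * N <= min_gain g dstar.
  exact: le_trans (le_min_gain K0 Hdh) (Hopt _ feas_dh).
have mg2 : min_gain g dstar <= dotv a dstar.
  rewrite /a /gw (big_morph (fun u => dotv u dstar) (fun u v => @dotvDl _ _ u v dstar) (@dotv0l _ _ dstar)).
  under eq_bigr do rewrite dotvZl.
  rewrite -[X in X <= _]mulr1 -Hw1 mulr_sumr; apply: ler_sum => i _.
  by rewrite mulrC ler_wpM2l // min_gain_le.
set e := dstar - g0.
have de : dstar = g0 + e by rewrite /e addrC subrK.
clearbody e.
have ae : r * N <= dotv a e.
  have E : dotv a dstar = dotv a g0 + dotv a e by rewrite {1}de dotvDr.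
  lra.
have ee : dotv e e <= r ^+ 2.
  move: Hfeas; rewrite /feasible -/r /normv.
  have -> : g0 - dstar = - e by rewrite de opprD addrA subrr add0r.
  rewrite dotvNl (@dotvC _ _ e) dotvNl opprK => H.
  have := sqr_sqrtr (dotv_ge0 e); have := sqrtr_ge0 (dotv e e).
  move: H; set s := Num.sqrt (dotv e e) => H Hs <-.
  by rewrite !expr2; nra.
have f0 : e - k *: a = 0.
  apply: dotv_eq0; rewrite !(dotvBl, dotvBr, dotvZl, dotvZr) (@dotvC _ _ e a) -NN.
  have h1 : r ^+ 2 <= k * dotv a e.
    by have := ler_wpM2l k0 ae; rewrite mulrCA kN -expr2.
  have h2 : k * (k * N ^+ 2) = r ^+ 2 by rewrite -kN; ring.
  lra.
have dstarE : dstar = g0 + k *: a by rewrite de (subr0_eq f0).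
split; first by rewrite dstarE.
apply/eqP; rewrite eq_le mg1 andbT.
apply: (le_trans mg2); rewrite dstarE dotvDr dotvZr -NN.
have -> : k * N ^+ 2 = r * N by rewrite -kN; ring.
by [].
Qed.
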